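(* Let $z,x,y\in[0,1]$ with $z=x+y$, and let $z=(z_0.z_1z_2\ldots)_2$, $x=(x_0.x_1x_2\ldots)_2$, $y=(y_0.y_1y_2\ldots)_2$ be concise binary expansions. Let $\ell\ge0$ be an index. If $x_\ell y_\ell z_\ell\in\{000,011,101,110\}$ and $z_j=0$ for all $j>\ell$, then $x_j=y_j=0$ for all $j>\ell$.
   Context: A concise binary expansion of a real number is a binary representation $(z_0.z_1z_2\ldots)_2=\sum_{i\ge0}z_i2^{-i}$ with $z_i\in\{0,1\}$ that does not end in an infinite string of 1s. $x_\ell y_\ell z_\ell$ denotes the concatenation of the three bits. *)

(* Defs.v *)
From Stdlib Require Import Reals.
Open Scope R_scope.

(* A concise binary expansion of r: r = sum_{i>=0} b_i 2^{-i}, b_i in {0,1},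
   and the digit sequence does not end in an infinite string of 1s. *)
Definition concise_binary_expansion (b : nat -> nat) (r : R) : Prop :=
  (forall i, b i = 0%nat \/ b i = 1%nat) /\
  (forall N, exists j, (j >= N)%nat /\ b j = 0%nat) /\
  infinite_sum (fun i => INR (b i) / 2 ^ i) r.

(* Main.v *)
Require Import Defs.
From Stdlib Require Import Reals Lra Lia.
Open Scope R_scope.

Lemma lim_ge f r N c : infinite_sum f r ->
  (forall n, (n >= N)%nat -> c <= sum_f_R0 f n) -> c <= r.
Proof.
  intros H Hc. destruct (Rle_lt_dec c r) as [h|h]; auto.
  destruct (H (c - r)) as [N' HN]; [lra|].
  specialize (HN (max N N') (Nat.le_max_r _ _)).
  specialize (Hc (max N N') (Nat.le_max_l _ _)).
  unfold R_dist in HN. apply Rabs_def2 in HN. lra.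
Qed.

Lemma lim_le f r N c : infinite_sum f r ->
  (forall n, (n >= N)%nat -> sum_f_R0 f n <= c) -> r <= c.
Proof.
  intros H Hc. destruct (Rle_lt_dec r c) as [h|h]; auto.
  destruct (H (r - c)) as [N' HN]; [lra|].
  specialize (HN (max N N') (Nat.le_max_r _ _)).
  specialize (Hc (max N N') (Nat.le_max_l _ _)).
  unfold R_dist in HN. apply Rabs_def2 in HN. lra.
Qed.

Definition fb (b : nat -> nat) i := INR (b i) / 2 ^ i.

Lemma fb_bounds b i : (b i = 0 \/ b i = 1)%nat -> 0 <= fb b i <= / 2 ^ i.
Proof.
  intros [h|h]; unfold fb; rewrite h; simpl;
  pose proof (pow_lt 2 i ltac:(lra)); split.
  - unfold Rdiv; lra.
  - unfold Rdiv; rewrite Rmult_0_l. left; apply Rinv_0_lt_compat; lra.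
  - unfold Rdiv; rewrite Rmult_1_l. left; apply Rinv_0_lt_compat; lra.
  - unfold Rdiv; lra.
Qed.

Lemma mono b a m : (forall i, b i = 0 \/ b i = 1)%nat ->
  sum_f_R0 (fb b) a <= sum_f_R0 (fb b) (a + m).
Proof.
  intros Hb. induction m. rewrite Nat.add_0_r; lra.
  rewrite Nat.add_succ_r. simpl. pose proof (fb_bounds b (S (a+m)) (Hb _)). lra.
Qed.

Lemma upb b a m : (forall i, b i = 0 \/ b i = 1)%nat ->
  sum_f_R0 (fb b) (a + m) <= sum_f_R0 (fb b) a + / 2 ^ a - / 2 ^ (a + m).
Proof.
  intros Hb. induction m. rewrite Nat.add_0_r; lra.
  rewrite Nat.add_succ_r. simpl sum_f_R0.
  pose proof (fb_bounds b (S (a+m)) (Hb _)).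
  assert (/ 2 ^ S (a + m) = / 2 ^ (a+m) / 2).
  { simpl. pose proof (pow_lt 2 (a+m) ltac:(lra)). field. lra. }
  lra.
Qed.

Fixpoint Sn (b : nat -> nat) n : nat :=
  match n with O => b O | S k => 2 * Sn b k + b (S k) end.

Lemma Sn_eq b n : sum_f_R0 (fb b) n = INR (Sn b n) / 2 ^ n.
Proof.
  induction n.
  - unfold fb. simpl. lra.
  - change (sum_f_R0 (fb b) (S n)) with (sum_f_R0 (fb b) n + fb b (S n)).
    rewrite IHn. unfold fb. change (Sn b (S n)) with (2 * Sn b n + b (S n))%nat.
    rewrite plus_INR, mult_INR. change (2 ^ S n) with (2 * 2 ^ n). simpl (INR 2).
    pose proof (pow_lt 2 n ltac:(lra)). field. lra.
Qed.

Lemma Sn_par b n : exists q, Sn b n = (2 * q + b n)%nat.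
Proof. destruct n; simpl. exists 0%nat; lia. eexists; reflexivity. Qed.

Lemma tail b r l : concise_binary_expansion b r ->
  sum_f_R0 (fb b) l <= r < sum_f_R0 (fb b) l + / 2 ^ l.
Proof.
  intros [Hb [Hz Hs]]. split.
  - apply (lim_ge (fb b) _ l); auto. intros n Hn.
    replace n with (l + (n - l))%nat by lia. apply mono; auto.
  - destruct (Hz (S l)) as [j [Hj Hbj]].
    assert (r <= sum_f_R0 (fb b) l + / 2 ^ l - / 2 ^ j).
    { apply (lim_le (fb b) _ j); auto. intros n Hn.
      pose proof (upb b j (n - j) Hb) as U. replace (j + (n - j))%nat with n in U by lia.
      destruct j as [|j']; [lia|].
      assert (E : sum_f_R0 (fb b) (S j') = sum_f_R0 (fb b) j').
      { simpl. unfold fb at 2. rewrite Hbj. simpl. lra. }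
      pose proof (upb b l (j' - l) Hb) as U2. replace (l + (j' - l))%nat with j' in U2 by lia.
      assert (/ 2 ^ S j' = / 2 ^ j' / 2).
      { simpl. pose proof (pow_lt 2 j' ltac:(lra)). field. lra. }
      assert (0 < / 2 ^ n) by (apply Rinv_0_lt_compat, pow_lt; lra).
      lra. }
    assert (0 < / 2 ^ j) by (apply Rinv_0_lt_compat, pow_lt; lra). lra.
Qed.

Lemma exact_z b r l : concise_binary_expansion b r ->
  (forall j, (j > l)%nat -> b j = 0%nat) -> r = sum_f_R0 (fb b) l.
Proof.
  intros C Hj. pose proof (tail _ _ l C) as [T _].
  destruct C as [Hb [_ Hs]].
  assert (r <= sum_f_R0 (fb b) l); [|lra].
  apply (lim_le (fb b) _ l); auto. intros n Hn.
  replace n with (l + (n - l))%nat by lia. induction (n - l)%nat.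
  - rewrite Nat.add_0_r; lra.
  - rewrite Nat.add_succ_r. simpl. unfold fb at 2. rewrite Hj by lia. simpl. lra.
Qed.

Lemma tail0 b r l : concise_binary_expansion b r -> r = sum_f_R0 (fb b) l ->
  forall j, (j > l)%nat -> b j = 0%nat.
Proof.
  intros C E j Hj. pose proof C as [Hb [_ Hs]].
  destruct (Hb j) as [h|h]; auto. exfalso.
  pose proof (tail _ _ j C) as [T _].
  destruct j as [|j']; [lia|].
  pose proof (mono b l (j' - l) Hb) as M. replace (l + (j' - l))%nat with j' in M by lia.
  simpl in T. unfold fb at 2 in T. rewrite h in T. simpl in T.
  assert (0 < 1 / (2 * 2 ^ j')) by (apply Rdiv_lt_0_compat; [lra| apply Rmult_lt_0_compat; [lra|apply pow_lt; lra]]).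
  lra.
Qed.

Theorem propositionC1 (x y z : R) (bx by_ bz : nat -> nat) (l : nat) :
  0 <= x <= 1 -> 0 <= y <= 1 -> 0 <= z <= 1 ->
  z = x + y ->
  concise_binary_expansion bz z ->
  concise_binary_expansion bx x ->
  concise_binary_expansion by_ y ->
  ((bx l, by_ l, bz l) = (0%nat, 0%nat, 0%nat) \/
   (bx l, by_ l, bz l) = (0%nat, 1%nat, 1%nat) \/
   (bx l, by_ l, bz l) = (1%nat, 0%nat, 1%nat) \/
   (bx l, by_ l, bz l) = (1%nat, 1%nat, 0%nat)) ->
  (forall j, (j > l)%nat -> bz j = 0%nat) ->
  forall j, (j > l)%nat -> bx j = 0%nat /\ by_ j = 0%nat.
Proof.
  intros _ _ _ Hxyz Cz Cx Cy Hd Hzj.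
  pose proof (exact_z _ _ _ Cz Hzj) as Ez.
  pose proof (tail _ _ l Cx) as Tx. pose proof (tail _ _ l Cy) as Ty.
  rewrite Sn_eq in Ez, Tx, Ty.
  pose proof (pow_lt 2 l ltac:(lra)) as P.
  set (p := 2 ^ l) in *.
  assert (Hc : (Sn bz l <= Sn bx l + Sn by_ l \/ Sn bz l = Sn bx l + Sn by_ l + 1
           \/ Sn bz l >= Sn bx l + Sn by_ l + 2)%nat) by lia.
  assert (K : INR (Sn bz l) = x * p + y * p).
  { rewrite <- Rmult_plus_distr_r, <- Hxyz, Ez. field. lra. }
  assert (Kx : INR (Sn bx l) <= x * p < INR (Sn bx l) + 1).
  { destruct Tx as [A B]. split.
    - apply Rmult_le_reg_r with (/p). apply Rinv_0_lt_compat; lra.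
      rewrite Rmult_assoc, Rinv_r by lra. lra.
    - apply Rmult_lt_reg_r with (/p). apply Rinv_0_lt_compat; lra.
      rewrite Rmult_assoc, Rinv_r by lra. rewrite Rmult_plus_distr_r, Rmult_1_l. lra. }
  assert (Ky : INR (Sn by_ l) <= y * p < INR (Sn by_ l) + 1).
  { destruct Ty as [A B]. split.
    - apply Rmult_le_reg_r with (/p). apply Rinv_0_lt_compat; lra.
      rewrite Rmult_assoc, Rinv_r by lra. lra.
    - apply Rmult_lt_reg_r with (/p). apply Rinv_0_lt_compat; lra.
      rewrite Rmult_assoc, Rinv_r by lra. rewrite Rmult_plus_distr_r, Rmult_1_l. lra. }
  destruct Hc as [Hc|[Hc|Hc]].
  - apply le_INR in Hc. rewrite plus_INR in Hc.
    assert (Ex : x * p = INR (Sn bx l)) by lra.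
    assert (Ey : y * p = INR (Sn by_ l)) by lra.
    assert (x = sum_f_R0 (fb bx) l).
    { rewrite Sn_eq. fold p. rewrite <- Ex. field. lra. }
    assert (y = sum_f_R0 (fb by_) l).
    { rewrite Sn_eq. fold p. rewrite <- Ey. field. lra. }
    intros j Hj. split; eapply tail0; eauto.
  - exfalso. destruct (Sn_par bx l) as [a Ha]. destruct (Sn_par by_ l) as [b Hb].
    destruct (Sn_par bz l) as [c Hc']. 
    destruct Hd as [H|[H|[H|H]]]; injection H; intros; lia.
  - apply le_INR in Hc. rewrite !plus_INR in Hc. simpl in Hc. lra.
Qed.
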